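(* Assume the general-case standing hypotheses, let $\sigma\in(0,1)$, $C_1>0$, $\gamma\in[0,2)$, $C_8>0$. Then there exist $\rho>0$ and $\bar\mu\in(0,\hat\mu]$ such that for all $\mu\in(0,\bar\mu]$ and all $(x,\lambda)\in\mathcal B((x^*,\lambda^* ),\delta)$ with $l<x<u$, $\lambda^l,\lambda^u>0$, $\|(x,\lambda)-(x^\mu,\lambda^\mu)\|<\rho$, $\|F_\mu(x,\lambda)\|\le C_1\mu$ and $\|(\Delta x^N_{\mathcal A_x},\Delta\lambda^{l,N}_{\mathcal I_l},\Delta\lambda^{u,N}_{\mathcal I_u})\|\ge C_8\mu^\gamma$ (Newton direction for $\mu^+=\sigma\mu$), the following holds. Define $(\Delta x,\Delta\lambda^l,\Delta\lambda^u)$ by: $\Delta x_i\in\{\Delta x_i^S,\Delta x_i^C\}$ for $i\in\mathcal A_x$ and $\Delta x_i=0$ for $i\in\mathcal I_x$; $\Delta\lambda^l_i=\Delta\lambda^{l,C}_i$ for $i\in\mathcal I_l$ and $0$ for $i\in\mathcal A_l$; $\Delta\lambda^u_i=\Delta\lambda^{u,C}_i$ for $i\in\mathcal I_u$ and $0$ for $i\in\mathcal A_u$. Then with $(x_+^N,\lambda_+^N)=(x,\lambda)+(\Delta x^N,\Delta\lambda^N)$ and $(x_+,\lambda_+)=(x,\lambda)+(\Delta x,\Delta\lambda)$, $$\|(x_+^N,\lambda_+^N)-(x_+,\lambda_+)\|\le\|(x_+^N,\lambda_+^N)-(x,\lambda)\|.$$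
   Context: General problem: minimize $f(x)$ subject to $l\le x\le u$, $l,u\in\mathbb R^n$, $l<u$, $f$ twice continuously differentiable with locally Lipschitz Hessian; multipliers $\lambda=(\lambda^l,\lambda^u)$. $F_\mu(x,\lambda)=\begin{bmatrix}\nabla f(x)-\lambda^l+\lambda^u\\ \Lambda^l(X-L)e-\mu e\\ \Lambda^u(U-X)e-\mu e\end{bmatrix}$ with $X,L,U,\Lambda^l,\Lambda^u$ the diagonal matrices of $x,l,u,\lambda^l,\lambda^u$; $F'(x,\lambda)=\begin{bmatrix}\nabla^2f(x)&-I&I\\ \Lambda^l&X-L&0\\ -\Lambda^u&0&U-X\end{bmatrix}$; Newton direction solves $F'(x,\lambda)(\Delta x^N,\Delta\lambda^{l,N},\Delta\lambda^{u,N})=-F_{\mu^+}(x,\lambda)$. Euclidean norms. Approximations: $\Delta x_i^S=-\frac1{d_i}\big([\nabla f(x)]_i-\mu^+[\frac1{x_i-l_i}-\frac1{u_i-x_i}]\big)$ with $d_i=[\nabla^2f(x)]_{ii}+\frac{\lambda^l_i}{x_i-l_i}+\frac{\lambda^u_i}{u_i-x_i}$; $\Delta x^C_i=-(x_i-l_i)+\mu^+/\lambda^l_i$ for $i\in\mathcal A_l$, $\Delta x_i^C=(u_i-x_i)-\mu^+/\lambda^u_i$ for $i\in\mathcal A_u$; $\Delta\lambda^{l,C}_i=-\lambda^l_i+\mu^+/(x_i-l_i)$, $\Delta\lambda^{u,C}_i=-\lambda^u_i+\mu^+/(u_i-x_i)$. Sets: $\mathcal A_l=\{i:x^*_i=l_i\}$,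 $\mathcal A_u=\{i:x^*_i=u_i\}$, $\mathcal I_l,\mathcal I_u$ complements, $\mathcal A_x=\mathcal A_l\cup\mathcal A_u$, $\mathcal I_x$ its complement. Standing hypotheses: $\nabla f(x^* )-\lambda^{l*}+\lambda^{u*}=0$, $l\le x^*\le u$, $\lambda^{l*},\lambda^{u*}\ge0$, $(x^*-l)_i\lambda^{l*}_i=0$, $(u-x^* )_i\lambda^{u*}_i=0$, $(x^*-l)+\lambda^{l*}>0$, $(u-x^* )+\lambda^{u*}>0$, $[\nabla^2f(x^* )]_{\mathcal I_x\mathcal I_x}\succ0$; $\delta>0$ with $F'$ nonsingular and boundedly invertible on $\mathcal B((x^*,\lambda^* ),\delta)$; $\hat\mu>0$ with a Lipschitz barrier trajectory $(x^\mu,\lambda^\mu)\in\mathcal B((x^*,\lambda^* ),\delta)$, $F_\mu(x^\mu,\lambda^\mu)=0$, $\|(x^\mu,\lambda^\mu)-(x^*,\lambda^* )\|\le C_4\mu$ for $\mu\in(0,\hat\mu]$. *)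

(* Defs.v *)
From HB Require Import structures.
From mathcomp Require Import all_boot all_order all_algebra.
From mathcomp Require Import all_classical all_reals all_analysis.
Set Implicit Arguments. Unset Strict Implicit. Unset Printing Implicit Defensive.
Import Order.TTheory GRing.Theory Num.Theory.
Import numFieldNormedType.Exports.
Local Open Scope ring_scope.

(* Points of R^n are row vectors 'rV[R]_n; component i of v is v 0 i. *)

Definition ev {R : realType} {n : nat} (i : 'I_n) : 'rV[R]_n := delta_mx 0 i.

Definition partial {R : realType} {n : nat} (g : 'rV[R]_n -> R) (i : 'I_n)
  (x : 'rV[R]_n) : R := derive g x (ev i).

Definition grad {R : realType} {n : nat} (f : 'rV[R]_n -> R) (x : 'rV[R]_n)
  : 'rV[R]_n := \row_i partial f i x.

Definition hess {R : realType} {n : nat} (f : 'rV[R]_n -> R) (x : 'rV[R]_n)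
  : 'M[R]_n := \matrix_(i, j) partial (partial f i) j x.

Definition C2 {R : realType} {n : nat} (f : 'rV[R]_n -> R) : Prop :=
  continuous f /\
  (forall i x, derivable f x (ev i)) /\
  (forall i, continuous (partial f i)) /\
  (forall i j x, derivable (partial f i) x (ev j)) /\
  (forall i j, continuous (partial (partial f i) j)).

Definition enormr {R : realType} {m : nat} (v : 'rV[R]_m) : R :=
  Num.sqrt (\sum_i v 0 i ^+ 2).
Definition enormc {R : realType} {m : nat} (z : 'cV[R]_m) : R :=
  Num.sqrt (\sum_i z i 0 ^+ 2).

(* Locally Lipschitz Hessian (any matrix norm; the constant is existential) *)
Definition loc_lipschitz_hess {R : realType} {n : nat} (f : 'rV[R]_n -> R) : Prop :=
  forall x : 'rV[R]_n, exists r : R, exists L : R, 0 < r /\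
    forall y z : 'rV[R]_n, enormr (y - x) < r -> enormr (z - x) < r ->
      `|hess f y - hess f z| <= L * enormr (y - z).

Definition stack3 {R : realType} {n : nat} (a b c : 'rV[R]_n) : 'cV[R]_(n + n + n) :=
  col_mx (col_mx a^T b^T) c^T.
Definition enorm3 {R : realType} {n : nat} (a b c : 'rV[R]_n) : R :=
  enormc (stack3 a b c).

Definition Fmu1 {R : realType} {n : nat} (f : 'rV[R]_n -> R)
  (x ll lu : 'rV[R]_n) : 'rV[R]_n := grad f x - ll + lu.
Definition Fmu2 {R : realType} {n : nat} (l : 'rV[R]_n) (mu : R)
  (x ll : 'rV[R]_n) : 'rV[R]_n := \row_i (ll 0 i * (x 0 i - l 0 i) - mu).
Definition Fmu3 {R : realType} {n : nat} (u : 'rV[R]_n) (mu : R)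
  (x lu : 'rV[R]_n) : 'rV[R]_n := \row_i (lu 0 i * (u 0 i - x 0 i) - mu).
Definition Fmu {R : realType} {n : nat} (f : 'rV[R]_n -> R) (l u : 'rV[R]_n)
  (mu : R) (x ll lu : 'rV[R]_n) : 'cV[R]_(n + n + n) :=
  stack3 (Fmu1 f x ll lu) (Fmu2 l mu x ll) (Fmu3 u mu x lu).

(* The Jacobian F'(x, lambda) as a 3n x 3n block matrix
   [[H, -I, I]; [Lambda^l, X - L, 0]; [-Lambda^u, 0, U - X]] *)
Definition Fprime {R : realType} {n : nat} (f : 'rV[R]_n -> R) (l u : 'rV[R]_n)
  (x ll lu : 'rV[R]_n) : 'M[R]_(n + n + n) :=
  block_mx
    (block_mx (hess f x) (- 1%:M) (diag_mx ll) (diag_mx (x - l)))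
    (col_mx 1%:M 0)
    (row_mx (- diag_mx lu) 0)
    (diag_mx (u - x)).

(* Approximate directions, with mup = mu^+ *)
Definition dS {R : realType} {n : nat} (f : 'rV[R]_n -> R) (l u : 'rV[R]_n)
  (mup : R) (x ll lu : 'rV[R]_n) (i : 'I_n) : R :=
  let d := hess f x i i + ll 0 i / (x 0 i - l 0 i) + lu 0 i / (u 0 i - x 0 i) in
  - (1 / d) * (grad f x 0 i - mup * (1 / (x 0 i - l 0 i) - 1 / (u 0 i - x 0 i))).

(* Delta x^C_i: the A_l formula if x*_i = l_i, the A_u formula if x*_i = u_i
   (only used for i in A_x; A_l and A_u are disjoint since l < u). *)
Definition dC {R : realType} {n : nat} (l u xs : 'rV[R]_n)
  (mup : R) (x ll lu : 'rV[R]_n) (i : 'I_n) : R :=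
  if xs 0 i == l 0 i then - (x 0 i - l 0 i) + mup / ll 0 i
  else (u 0 i - x 0 i) - mup / lu 0 i.

Definition dllC {R : realType} {n : nat} (l : 'rV[R]_n) (mup : R)
  (x ll : 'rV[R]_n) (i : 'I_n) : R := - ll 0 i + mup / (x 0 i - l 0 i).
Definition dluC {R : realType} {n : nat} (u : 'rV[R]_n) (mup : R)
  (x lu : 'rV[R]_n) (i : 'I_n) : R := - lu 0 i + mup / (u 0 i - x 0 i).

(* || (dx_{A_x}, dll_{I_l}, dlu_{I_u}) || (Euclidean) *)
Definition norm_active {R : realType} {n : nat} (l u xs : 'rV[R]_n)
  (dx dll dlu : 'rV[R]_n) : R :=
  Num.sqrt (\sum_(i | (xs 0 i == l 0 i) || (xs 0 i == u 0 i)) dx 0 i ^+ 2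
          + \sum_(i | xs 0 i != l 0 i) dll 0 i ^+ 2
          + \sum_(i | xs 0 i != u 0 i) dlu 0 i ^+ 2).

(* Main.v *)
Require Import Defs.
From HB Require Import structures.
From mathcomp Require Import all_boot all_order all_algebra.
From mathcomp Require Import all_classical all_reals all_analysis.
From mathcomp Require Import ring lra.
Import Order.TTheory GRing.Theory Num.Theory.
Import numFieldNormedType.Exports.
Local Open Scope ring_scope.

Module Helpers.
Set Implicit Arguments. Unset Strict Implicit.


Lemma sum_stack3 (R : realType) (n : nat) (a b c : 'rV[R]_n) :
  \sum_(k < n + n + n) (stack3 a b c) k 0 ^+ 2 =
  \sum_(i < n) (a 0 i ^+ 2 + b 0 i ^+ 2 + c 0 i ^+ 2).
Proof.
rewrite big_split_ord big_split_ord /= !big_split /=.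
congr (_ + _ + _); apply: eq_bigr => i _;
  by rewrite /stack3 ?col_mxEu ?col_mxEd !mxE.
Qed.

Lemma enorm3E (R : realType) (n : nat) (a b c : 'rV[R]_n) :
  enorm3 a b c = Num.sqrt (\sum_(i < n) (a 0 i ^+ 2 + b 0 i ^+ 2 + c 0 i ^+ 2)).
Proof. by rewrite /enorm3 /enormc sum_stack3. Qed.

Lemma le_sum_single (R : realType) (n : nat) (F : 'I_n -> R) (i : 'I_n) :
  (forall j, 0 <= F j) -> F i <= \sum_j F j.
Proof.
move=> F0; rewrite (bigD1 i) //= lerDl; apply: sumr_ge0 => j _; exact: F0.
Qed.

Lemma le_norm_sqrt (R : realType) (t S : R) : t ^+ 2 <= S -> `|t| <= Num.sqrt S.
Proof.
move=> h; rewrite -sqrtr_sqr ler_sqrt //; apply: le_trans h; exact: sqr_ge0.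
Qed.

Lemma enorm3_comp (R : realType) (n : nat) (a b c : 'rV[R]_n) (i : 'I_n) :
  `|a 0 i| <= enorm3 a b c /\ `|b 0 i| <= enorm3 a b c /\ `|c 0 i| <= enorm3 a b c.
Proof.
rewrite enorm3E.
have H := @le_sum_single R n (fun i => a 0 i ^+ 2 + b 0 i ^+ 2 + c 0 i ^+ 2) i.
have /H {}H : forall j, 0 <= a 0 j ^+ 2 + b 0 j ^+ 2 + c 0 j ^+ 2.
  by move=> j; rewrite !addr_ge0 // sqr_ge0.
have ha := sqr_ge0 (a 0 i); have hb := sqr_ge0 (b 0 i); have hc := sqr_ge0 (c 0 i).
split; [|split]; apply: le_norm_sqrt; lra.
Qed.

Lemma enorm3_bound (R : realType) (n : nat) (a b c : 'rV[R]_n) (B : R) :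
  (forall i, `|a 0 i| <= B /\ `|b 0 i| <= B /\ `|c 0 i| <= B) ->
  enorm3 a b c <= (3 * n%:R) * B.
Proof.
move=> hB; rewrite enorm3E.
case: n a b c hB => [|n] a b c hB.
  by rewrite big_ord0 sqrtr0 mulr0 mul0r.
have B0 : 0 <= B by case: (hB ord0) => h _; apply: le_trans h.
rewrite -(ger0_norm (_ : 0 <= 3 * n.+1%:R * B)); last first.
  by rewrite mulr_ge0 // mulr_ge0.
rewrite -sqrtr_sqr; apply: ler_wsqrtr.
apply: (@le_trans _ _ (\sum_(i < n.+1) (3 * B ^+ 2))).
  apply: ler_sum => i _; case: (hB i) => [h1 [h2 h3]].
  have e1 : a 0 i ^+ 2 <= B ^+ 2 by rewrite -real_normK ?num_real // lerXn2r // ?nnegrE //.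
  have e2 : b 0 i ^+ 2 <= B ^+ 2 by rewrite -real_normK ?num_real // lerXn2r // ?nnegrE //.
  have e3 : c 0 i ^+ 2 <= B ^+ 2 by rewrite -real_normK ?num_real // lerXn2r // ?nnegrE //.
  lra.
rewrite sumr_const card_ord.
have hn : 1 <= n.+1%:R :> R by rewrite ler1n.
rewrite -mulr_natr; nra.
Qed.

Lemma stack3N (R : realType) (n : nat) (a b c : 'rV[R]_n) :
  - stack3 a b c = stack3 (- a) (- b) (- c).
Proof. by rewrite /stack3 !opp_col_mx !linearN. Qed.

Lemma rows (R : realType) (n : nat) (f : 'rV[R]_n -> R) (l u x ll lu a b c z1 z2 z3 : 'rV[R]_n) :
  Fprime f l u x ll lu *m stack3 a b c = stack3 z1 z2 z3 ->
  forall i, (\sum_j hess f x i j * a 0 j) - b 0 i + c 0 i = z1 0 i /\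
           ll 0 i * a 0 i + (x 0 i - l 0 i) * b 0 i = z2 0 i /\
           - (lu 0 i * a 0 i) + (u 0 i - x 0 i) * c 0 i = z3 0 i.
Proof.
rewrite /Fprime /stack3 mul_block_col mul_block_col mul_row_col mul_col_mx add_col_mx.
move=> H; have [H12 h3] := eq_col_mx H; have [h1 h2] := eq_col_mx H12 => i.
rewrite !mulNmx !mul_diag_mx !mul0mx !addr0 !mul1mx in h1 h2 h3.
move: (congr1 (fun M : 'M[R]_(n,1) => M i 0) h1) (congr1 (fun M : 'M[R]_(n,1) => M i 0) h2) (congr1 (fun M : 'M[R]_(n,1) => M i 0) h3) => /=.
rewrite !mxE.
rewrite (@eq_bigr _ _ _ _ _ _ _ (fun j => hess f x i j * a 0 j)); last by move=> j _; rewrite !mxE.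
by move=> -> -> ->.
Qed.

Lemma err_gen (R : realType) (d e ll a c2 Q A : R) :
  0 < c2 -> c2 <= d -> 0 <= ll -> ll * d <= Q -> `|a| <= A ->
  `|d * e| <= ll * `|a| -> `|e| * c2 ^+ 2 <= Q * A.
Proof.
move=> c20 c2d ll0 lld aA.
rewrite normrM (gtr0_norm (lt_le_trans c20 c2d)) => h.
have E0 := normr_ge0 e; have N0 := normr_ge0 a.
have h1 : `|e| * c2 ^+ 2 <= `|e| * d ^+ 2.
  by apply: ler_wpM2l => //; rewrite lerXn2r // nnegrE ltW // (lt_le_trans c20 c2d).
apply: le_trans h1 _.
have h2 : `|e| * d ^+ 2 <= ll * `|a| * d.
  have d0 : 0 <= d by apply: le_trans (ltW c20) c2d.
  rewrite expr2 mulrA; apply: ler_wpM2r => //; by rewrite mulrC.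
apply: le_trans h2 _.
have d0 : 0 <= d by apply: le_trans (ltW c20) c2d.
have A0 : 0 <= A by apply: le_trans N0 aA.
have -> : ll * `|a| * d = (ll * d) * `|a| by ring.
apply: ler_pM => //; exact: mulr_ge0.
Qed.

Lemma errA (R : realType) (ll d a b s : R) :
  0 < d -> 0 <= ll -> ll * a + d * b = - (ll * d - s) ->
  `|d * (b - (- ll + s / d))| <= ll * `|a|.
Proof.
move=> d0 ll0 E.
have -> : d * (b - (- ll + s / d)) = - (ll * a).
  have dn : d != 0 by rewrite gt_eqF.
  rewrite mulrDr mulrN mulrDr mulrN mulrCA mulfV // mulr1; lra.
by rewrite normrN normrM ger0_norm.
Qed.

Lemma errB (R : realType) (ll d a b s : R) :
  0 <= d -> 0 < ll -> ll * a + d * b = - (ll * d - s) ->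
  `|ll * (a - (- d + s / ll))| <= d * `|b|.
Proof.
move=> d0 ll0 E.
have -> : ll * (a - (- d + s / ll)) = - (d * b).
  have dn : ll != 0 by rewrite gt_eqF.
  rewrite mulrDr mulrN mulrDr mulrN mulrCA mulfV // mulr1; lra.
by rewrite normrN normrM ger0_norm.
Qed.

Lemma errC (R : realType) (lu d a c s : R) :
  0 < d -> 0 <= lu -> - (lu * a) + d * c = - (lu * d - s) ->
  `|d * (c - (- lu + s / d))| <= lu * `|a|.
Proof.
move=> d0 ll0 E.
have -> : d * (c - (- lu + s / d)) = lu * a.
  have dn : d != 0 by rewrite gt_eqF.
  rewrite mulrDr mulrN mulrDr mulrN mulrCA mulfV // mulr1; lra.
by rewrite normrM ger0_norm.
Qed.

Lemma errD (R : realType) (lu d a c s : R) :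
  0 <= d -> 0 < lu -> - (lu * a) + d * c = - (lu * d - s) ->
  `|lu * (a - (d - s / lu))| <= d * `|c|.
Proof.
move=> d0 ll0 E.
have -> : lu * (a - (d - s / lu)) = d * c.
  have dn : lu != 0 by rewrite gt_eqF.
  rewrite mulrDr mulrN mulrBr mulrCA mulfV // mulr1; lra.
by rewrite normrM ger0_norm.
Qed.

Lemma errS (R : realType) (h S g ll lu d1 d3 a b c s : R) :
  0 < d1 -> 0 < d3 ->
  h * a + S - b + c = - (g - ll + lu) ->
  ll * a + d1 * b = - (ll * d1 - s) ->
  - (lu * a) + d3 * c = - (lu * d3 - s) ->
  let D := h + ll / d1 + lu / d3 in
  D != 0 ->
  D * (a - (- (1 / D) * (g - s * (1 / d1 - 1 / d3)))) = - S.
Proof.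
move=> d10 d30 E1 E2 E3 D Dn.
have hb : b = (- (ll * d1 - s) - ll * a) / d1.
  rewrite -E2; field; by rewrite gt_eqF.
have hc : c = (- (lu * d3 - s) + lu * a) / d3.
  rewrite -E3; field; by rewrite gt_eqF.
have hS : S = - (g - ll + lu) - h * a + b - c by lra.
rewrite hS hb hc /D.
rewrite /D in Dn.
have n1 : d1 != 0 by rewrite gt_eqF.
have n3 : d3 != 0 by rewrite gt_eqF.
have hD : (h * d1 + ll) * d3 + lu * d1 = (h + ll / d1 + lu / d3) * (d1 * d3) by field; apply/andP.
field; rewrite n1 n3 hD /= mulf_neq0 // mulf_neq0 //.
Qed.

Lemma big_ratio (R : realType) (ll d1 c2 Q : R) :
  0 < c2 -> c2 <= ll -> 0 < d1 -> ll * d1 <= Q -> c2 ^+ 2 <= (ll / d1) * Q.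
Proof.
move=> c20 c2l d10 lQ.
have l0 : 0 < ll by apply: lt_le_trans c2l.
have r0 : 0 <= ll / d1 by rewrite divr_ge0 // ltW.
apply: (@le_trans _ _ ((ll / d1) * (ll * d1))); last exact: ler_wpM2l.
have -> : ll / d1 * (ll * d1) = ll ^+ 2 by field; rewrite gt_eqF.
by rewrite lerXn2r // nnegrE ltW.
Qed.

Lemma Dpos (R : realType) (h p q Hb Q c2 : R) :
  0 < c2 -> 0 <= p -> 0 <= q -> c2 ^+ 2 <= (p + q) * Q -> `|h| <= Hb ->
  2 * Hb * Q <= c2 ^+ 2 -> 0 <= Q ->
  c2 ^+ 2 <= 2 * (h + p + q) * Q.
Proof.
move=> c20 p0 q0 hpq hH hHQ Q0.
have : - Hb <= h by move: hH; rewrite ler_norml => /andP[].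
move=> h1.
have : - Hb * Q <= h * Q by apply: ler_wpM2r.
nra.
Qed.

Lemma errS_bound (R : realType) (D e S W Q c2 : R) :
  c2 ^+ 2 <= 2 * D * Q -> D * e = - S -> `|S| <= W -> 0 < c2 -> 0 <= Q ->
  `|e| * c2 ^+ 2 <= 2 * Q * W.
Proof.
move=> hD hE hS c20 Q0.
have D0 : 0 < D.
  have c2p : 0 < c2 ^+ 2 by rewrite exprn_gt0.
  case: (lerP D 0) => // hD0.
  have : D * Q <= 0 by rewrite mulr_le0_ge0.
  lra.
have hs : `|e| * D <= W by rewrite -(gtr0_norm D0) -normrM mulrC hE normrN.
have E0 := normr_ge0 e.
have : `|e| * c2 ^+ 2 <= `|e| * (2 * D * Q) by apply: ler_wpM2l.
have : `|e| * D * Q <= W * Q by apply: ler_wpM2r.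
nra.
Qed.

Lemma pow_lemma (R : realType) (gamma C8 G : R) :
  0 <= gamma < 2 -> 0 < C8 -> 1 <= G ->
  exists m0, 0 < m0 /\ forall mu, 0 < mu <= m0 ->
    G * (mu ^+ 2) ^+ 2 <= (C8 * mu `^ gamma) ^+ 2.
Proof.
move=> /andP[g0 g2] C80 G1.
have G0 : 0 < G by apply: lt_le_trans G1.
have T0 : 0 < C8 / G by rewrite divr_gt0.
have p0 : 0 < 2 - gamma by rewrite subr_gt0.
exists ((C8 / G) `^ (2 - gamma)^-1); split; first exact: powR_gt0.
move=> mu /andP[mu0 mum].
have hq : mu `^ (2 - gamma) <= C8 / G.
  have := @ge0_ler_powR R (2 - gamma) (ltW p0) mu ((C8 / G) `^ (2 - gamma)^-1).
  rewrite !nnegrE -powRrM mulVf ?gt_eqF // powRr1 ?(ltW T0) //.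
  by move=> /(_ (ltW mu0) (powR_ge0 _ _) mum).
have h2 : mu ^+ 2 = mu `^ gamma * mu `^ (2 - gamma).
  rewrite -powRD; last by apply/implyP => _; rewrite gt_eqF.
  by rewrite addrC subrK powR_mulrn //; exact: ltW.
rewrite h2.
have r0 := powR_ge0 mu gamma.
have q0 := powR_ge0 mu (2 - gamma).
set r := mu `^ gamma in r0 *; set q := mu `^ (2 - gamma) in q0 hq *.
have qG : q * G <= C8 by rewrite -ler_pdivlMr.
have : G * q ^+ 2 <= C8 ^+ 2.
  have : G * q ^+ 2 <= (q * G) ^+ 2 by nra.
  move=> h; apply: le_trans h _; rewrite lerXn2r // nnegrE ?mulr_ge0 // ?ltW //.
move=> h.
have -> : G * (r * q) ^+ 2 = r ^+ 2 * (G * q ^+ 2) by ring.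
have -> : (C8 * r) ^+ 2 = r ^+ 2 * C8 ^+ 2 by ring.
by apply: ler_wpM2l => //; exact: sqr_ge0.
Qed.

Lemma hess_nbhd (R : realType) (n : nat) (f : 'rV[R]_n -> R) (xs : 'rV[R]_n) :
  C2 f -> exists e, 0 < e /\ forall x : 'rV[R]_n,
    (forall i, `|x 0 i - xs 0 i| < e) ->
    forall i j, `|hess f x i j| <= `|hess f xs| + 1.
Proof.
move=> [_ [_ [_ [_ hc]]]].
have P : forall i j, \forall x \near xs, `|hess f xs i j - hess f x i j| < 1.
  move=> i j; have := cvgr_dist_lt _ _ (hc i j xs) _ ltr01.
  move=> h; near=> x; rewrite !mxE; near: x; exact: h.
have P2 : \forall x \near xs, forall i j, `|hess f xs i j - hess f x i j| < 1.
  have FF : Filter (nbhs xs) by exact: nbhs_filter.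
  apply: (@filter_forall _ 'I_n (fun i x => forall j, `|hess f xs i j - hess f x i j| < 1) (nbhs xs) FF) => i.
  apply: (@filter_forall _ 'I_n (fun j x => `|hess f xs i j - hess f x i j| < 1) (nbhs xs) FF) => j.
  exact: P.
move/nbhs_ballP: P2 => [e e0 he]; exists e; split => // x hx i j.
have bx : ball xs e x.
  rewrite -ball_normE /ball_ /=.
  have -> : `|xs - x| = mx_norm (xs - x) by [].
  rewrite mx_normrE.
  apply: bigmax_lt => // [[a b]] _ /=.
  by rewrite (ord1 a) !mxE distrC.
have := he x bx i j.
have : `|hess f xs i j| <= `|hess f xs|.
  rewrite [X in _ <= X]mx_normrE.
  exact: (le_bigmax _ (fun ij => `|hess f xs ij.1 ij.2|) (i, j)).
move=> h1 h2.
have := ler_dist_dist (hess f xs i j) (hess f x i j).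
rewrite ler_norml => /andP[_ h3].
move: h3 h1 h2; set A := `|hess f xs i j|; set B := `|hess f x i j|.
move=> h3 h1 h2.
have : `|A - B| < 1 by apply: le_lt_trans (ler_dist_dist _ _) h2.
rewrite ltr_norml => /andP[h4 _]; lra.
Unshelve. all: by end_near. Qed.

Lemma exists_lb (R : realType) (n : nat) (q : 'I_n -> R) :
  (forall i, 0 < q i) -> exists c, 0 < c /\ forall i, c <= q i.
Proof.
move=> q0.
have S0 : 0 <= \sum_i (q i)^-1 by apply: sumr_ge0 => i _; rewrite invr_ge0 ltW.
exists (1 + \sum_i (q i)^-1)^-1; split; first by rewrite invr_gt0; lra.
move=> i.
have hi : (q i)^-1 <= \sum_j (q j)^-1.
  rewrite (bigD1 i) //= lerDl; apply: sumr_ge0 => j _; rewrite invr_ge0 ltW //.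
have p0 : 0 < 1 + \sum_i (q i)^-1 by lra.
rewrite -[q i]invrK lef_pV2 ?posrE ?invr_gt0 //; lra.
Qed.

Lemma sq_le (R : realType) (t Z : R) : `|t| <= Z -> t ^+ 2 <= Z ^+ 2.
Proof.
move=> h; have Z0 : 0 <= Z by apply: le_trans h.
by rewrite -real_normK ?num_real // lerXn2r // nnegrE.
Qed.

Lemma per_i (R : realType) (A IL IU : bool) (xN lN uN x' l' u' Z : R) :
  (A -> `|xN - x'| <= Z) -> (~~ A -> x' = 0) ->
  (IL -> `|lN - l'| <= Z) -> (~~ IL -> l' = 0) ->
  (IU -> `|uN - u'| <= Z) -> (~~ IU -> u' = 0) ->
  (xN - x') ^+ 2 + (lN - l') ^+ 2 + (uN - u') ^+ 2 +
  ((if A then xN ^+ 2 else 0) + (if IL then lN ^+ 2 else 0) + (if IU then uN ^+ 2 else 0))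
  <= xN ^+ 2 + lN ^+ 2 + uN ^+ 2 + 3 * Z ^+ 2.
Proof.
move=> h1 h2 h3 h4 h5 h6.
have Z2 := sqr_ge0 Z.
have e1 : (xN - x') ^+ 2 + (if A then xN ^+ 2 else 0) <= xN ^+ 2 + Z ^+ 2.
  case: A h1 h2 => h1 h2; first by have := @sq_le R _ _ (h1 isT); lra.
  by rewrite h2 // subr0; lra.
have e2 : (lN - l') ^+ 2 + (if IL then lN ^+ 2 else 0) <= lN ^+ 2 + Z ^+ 2.
  case: IL h3 h4 => h7 h8; first by have := @sq_le R _ _ (h7 isT); lra.
  by rewrite h8 // subr0; lra.
have e3 : (uN - u') ^+ 2 + (if IU then uN ^+ 2 else 0) <= uN ^+ 2 + Z ^+ 2.
  case: IU h5 h6 => h7 h8; first by have := @sq_le R _ _ (h7 isT); lra.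
  by rewrite h8 // subr0; lra.
lra.
Qed.

Lemma final_sum (R : realType) (n : nat) (l u xs dxN dllN dluN dx dll dlu : 'rV[R]_n) (Z B : R) :
  (forall i, ((xs 0 i == l 0 i) || (xs 0 i == u 0 i)) -> `|dxN 0 i - dx 0 i| <= Z) ->
  (forall i, ~~ ((xs 0 i == l 0 i) || (xs 0 i == u 0 i)) -> dx 0 i = 0) ->
  (forall i, xs 0 i != l 0 i -> `|dllN 0 i - dll 0 i| <= Z) ->
  (forall i, ~~ (xs 0 i != l 0 i) -> dll 0 i = 0) ->
  (forall i, xs 0 i != u 0 i -> `|dluN 0 i - dlu 0 i| <= Z) ->
  (forall i, ~~ (xs 0 i != u 0 i) -> dlu 0 i = 0) ->
  B <= norm_active l u xs dxN dllN dluN -> 0 <= B ->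
  3 * n%:R * Z ^+ 2 <= B ^+ 2 ->
  enorm3 (dxN - dx) (dllN - dll) (dluN - dlu) <= enorm3 dxN dllN dluN.
Proof.
move=> h1 h2 h3 h4 h5 h6 hB B0 hZ.
rewrite !enorm3E; apply: ler_wsqrtr.
set act := fun i : 'I_n => ((if (xs 0 i == l 0 i) || (xs 0 i == u 0 i) then dxN 0 i ^+ 2 else 0)
   + (if xs 0 i != l 0 i then dllN 0 i ^+ 2 else 0) + (if xs 0 i != u 0 i then dluN 0 i ^+ 2 else 0)).
have Sact : norm_active l u xs dxN dllN dluN = Num.sqrt (\sum_i act i).
  by rewrite /norm_active /act !big_split /= -!big_mkcond.
have hact : B ^+ 2 <= \sum_i act i.
  have a0 : 0 <= \sum_i act i.
    apply: sumr_ge0 => i _; rewrite /act.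
    by rewrite !addr_ge0 //; case: ifP => _; rewrite ?sqr_ge0.
  rewrite -(sqr_sqrtr a0) -Sact.
  have hs : 0 <= norm_active l u xs dxN dllN dluN by apply: le_trans hB.
  by rewrite lerXn2r ?nnegrE.
have key : \sum_i ((dxN - dx) 0 i ^+ 2 + (dllN - dll) 0 i ^+ 2 + (dluN - dlu) 0 i ^+ 2)
   + \sum_i act i <= \sum_i (dxN 0 i ^+ 2 + dllN 0 i ^+ 2 + dluN 0 i ^+ 2) + \sum_(i < n) (3 * Z ^+ 2).
  rewrite -!big_split /=; apply: ler_sum => i _; rewrite !mxE /act.
  apply: per_i; [exact: h1|exact: h2|exact: h3|exact: h4|exact: h5|exact: h6].
have e : (3 * Z ^+ 2) *+ n = 3 * n%:R * Z ^+ 2.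
  rewrite -mulr_natr; ring.
move: key; rewrite sumr_const card_ord e => key.
lra.
Qed.


Lemma sum_bound (R : realType) (n : nat) (F : 'I_n -> R) (i : 'I_n) (B : R) :
  (forall j, `|F j| <= B) -> `|\sum_(j | j != i) F j| <= n%:R * B.
Proof.
move=> hF.
have B0 : 0 <= B by apply: le_trans (hF i).
apply: le_trans (ler_norm_sum _ _ _) _.
apply: (@le_trans _ _ (\sum_(j < n) B)); last by rewrite sumr_const card_ord mulr_natl.
rewrite big_mkcond /=; apply: ler_sum => j _; case: ifP => _ //.
Qed.

Lemma subE (R : realType) (n : nat) (v w : 'rV[R]_n) i : (v - w) 0 i = v 0 i - w 0 i.
Proof. by rewrite !mxE. Qed.
Lemma oppE (R : realType) (n : nat) (v : 'rV[R]_n) i : (- v) 0 i = - v 0 i.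
Proof. by rewrite !mxE. Qed.
Lemma Fmu1E (R : realType) (n : nat) (f : 'rV[R]_n -> R) (x ll lu : 'rV[R]_n) i :
  Fmu1 f x ll lu 0 i = grad f x 0 i - ll 0 i + lu 0 i.
Proof. by rewrite /Fmu1 !mxE. Qed.
Lemma Fmu2E (R : realType) (n : nat) (l : 'rV[R]_n) mu (x ll : 'rV[R]_n) i :
  Fmu2 l mu x ll 0 i = ll 0 i * (x 0 i - l 0 i) - mu.
Proof. by rewrite /Fmu2 !mxE. Qed.
Lemma Fmu3E (R : realType) (n : nat) (u : 'rV[R]_n) mu (x lu : 'rV[R]_n) i :
  Fmu3 u mu x lu 0 i = lu 0 i * (u 0 i - x 0 i) - mu.
Proof. by rewrite /Fmu3 !mxE. Qed.

End Helpers.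
Import Helpers.

Theorem mainTheorem10 (R : realType) (n : nat) (f : 'rV[R]_n -> R)
  (l u xs lls lus : 'rV[R]_n) (delta muhat C4 : R)
  (xmu llmu lumu : R -> 'rV[R]_n) (sigma C1 gamma C8 : R) :
  (* problem data *)
  (forall i, l 0 i < u 0 i) ->
  C2 f -> loc_lipschitz_hess f ->
  (* standing hypotheses at (xstar, lambdastar) *)
  grad f xs - lls + lus = 0 ->
  (forall i, l 0 i <= xs 0 i <= u 0 i) ->
  (forall i, 0 <= lls 0 i) -> (forall i, 0 <= lus 0 i) ->
  (forall i, (xs 0 i - l 0 i) * lls 0 i = 0) ->
  (forall i, (u 0 i - xs 0 i) * lus 0 i = 0) ->
  (forall i, 0 < (xs 0 i - l 0 i) + lls 0 i) ->
  (forall i, 0 < (u 0 i - xs 0 i) + lus 0 i) ->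
  (forall v : 'rV[R]_n, v != 0 ->
     (forall i, xs 0 i = l 0 i \/ xs 0 i = u 0 i -> v 0 i = 0) ->
     0 < (v *m hess f xs *m v^T) 0 0) ->
  0 < delta ->
  (exists K : R, forall x ll lu : 'rV[R]_n,
     enorm3 (x - xs) (ll - lls) (lu - lus) < delta ->
     Fprime f l u x ll lu \in unitmx /\
     forall z : 'cV[R]_(n + n + n),
       enormc (invmx (Fprime f l u x ll lu) *m z) <= K * enormc z) ->
  0 < muhat ->
  (exists Lt : R, forall mu mu' : R, 0 < mu <= muhat -> 0 < mu' <= muhat ->
     enorm3 (xmu mu - xmu mu') (llmu mu - llmu mu') (lumu mu - lumu mu')
       <= Lt * `|mu - mu'|) ->
  (forall mu, 0 < mu <= muhat ->
     enorm3 (xmu mu - xs) (llmu mu - lls) (lumu mu - lus) < delta) ->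
  (forall mu, 0 < mu <= muhat -> Fmu f l u mu (xmu mu) (llmu mu) (lumu mu) = 0) ->
  (forall mu, 0 < mu <= muhat ->
     enorm3 (xmu mu - xs) (llmu mu - lls) (lumu mu - lus) <= C4 * mu) ->
  (* parameters of the theorem *)
  0 < sigma < 1 -> 0 < C1 -> 0 <= gamma < 2 -> 0 < C8 ->
  exists rho : R, exists mubar : R, 0 < rho /\ 0 < mubar <= muhat /\
  forall mu : R, 0 < mu <= mubar ->
  forall x ll lu : 'rV[R]_n,
    enorm3 (x - xs) (ll - lls) (lu - lus) < delta ->
    (forall i, l 0 i < x 0 i < u 0 i) ->
    (forall i, 0 < ll 0 i) -> (forall i, 0 < lu 0 i) ->
    enorm3 (x - xmu mu) (ll - llmu mu) (lu - lumu mu) < rho ->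
    enormc (Fmu f l u mu x ll lu) <= C1 * mu ->
  forall dxN dllN dluN : 'rV[R]_n,
    Fprime f l u x ll lu *m stack3 dxN dllN dluN
      = - Fmu f l u (sigma * mu) x ll lu ->
    norm_active l u xs dxN dllN dluN >= C8 * powR mu gamma ->
  forall dx dll dlu : 'rV[R]_n,
    (forall i, xs 0 i = l 0 i \/ xs 0 i = u 0 i ->
       dx 0 i = dS f l u (sigma * mu) x ll lu i \/
       dx 0 i = dC l u xs (sigma * mu) x ll lu i) ->
    (forall i, xs 0 i <> l 0 i -> xs 0 i <> u 0 i -> dx 0 i = 0) ->
    (forall i, xs 0 i <> l 0 i -> dll 0 i = dllC l (sigma * mu) x ll i) ->
    (forall i, xs 0 i = l 0 i -> dll 0 i = 0) ->
    (forall i, xs 0 i <> u 0 i -> dlu 0 i = dluC u (sigma * mu) x lu i) ->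
    (forall i, xs 0 i = u 0 i -> dlu 0 i = 0) ->
    enorm3 ((x + dxN) - (x + dx)) ((ll + dllN) - (ll + dll)) ((lu + dluN) - (lu + dlu))
      <= enorm3 ((x + dxN) - x) ((ll + dllN) - ll) ((lu + dluN) - lu).
Proof.
move=> hlu hC2 _ _ hbox hlls hlus hcl hcu hpl hpu _ _ [K hK] muhat0 _ _ _ hC4
  /andP[s0 s1] C10 hg C80.
have [e [e0 he]] := @hess_nbhd R n f xs hC2.
have [c [c0 hc]] : exists c : R, 0 < c /\ forall i, c <= xs 0 i - l 0 i + lls 0 i /\ c <= u 0 i - xs 0 i + lus 0 i.
  have [c [c0 hc]] := @exists_lb R n (fun i => Num.min (xs 0 i - l 0 i + lls 0 i) (u 0 i - xs 0 i + lus 0 i))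
    (fun i => ltac:(by rewrite lt_min hpl hpu)).
  exists c; split => // i; have := hc i; rewrite le_min => /andP[h1 h2]; by split.
have hAl : forall i, xs 0 i = l 0 i -> c <= lls 0 i.
  move=> i h; have [h1 _] := hc i; have : xs 0 i - l 0 i = 0 by rewrite h subrr.
  lra.
have hAu : forall i, xs 0 i = u 0 i -> c <= lus 0 i.
  move=> i h; have [_ h1] := hc i; have : u 0 i - xs 0 i = 0 by rewrite h subrr.
  lra.
have hIl : forall i, xs 0 i != l 0 i -> c <= xs 0 i - l 0 i /\ lls 0 i = 0.
  move=> i h; have := hcl i; move/eqP; rewrite mulf_eq0 subr_eq0 (negbTE h) /= => /eqP e1.
  by have [h1 _] := hc i; move: h1; rewrite e1 addr0.
have hIu : forall i, xs 0 i != u 0 i -> c <= u 0 i - xs 0 i /\ lus 0 i = 0.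
  move=> i h; have := hcu i; move/eqP; rewrite mulf_eq0 subr_eq0 eq_sym (negbTE h) /= => /eqP e1.
  by have [_ h1] := hc i; move: h1; rewrite e1 addr0.
pose c2 := c / 2.
have c20 : 0 < c2 by rewrite /c2 divr_gt0.
pose P := 1 + C1.
have P0 : 0 < P by rewrite /P; lra.
pose M := `|K| * (3 * n%:R * (C1 + 1)).
have M0 : 0 <= M by rewrite /M mulr_ge0 // mulr_ge0 // ?mulr_ge0 //; lra.
pose Hb := `|hess f xs| + 1.
have Hb0 : 0 < Hb by rewrite /Hb; have := normr_ge0 (hess f xs); lra.
pose Ec := P * M * (1 + 2 * n%:R * Hb).
have Ec0 : 0 <= Ec.
  rewrite /Ec mulr_ge0 // ?mulr_ge0 //; try lra.
  have : 0 <= 2 * n%:R * Hb :> R by rewrite mulr_ge0 // ?mulr_ge0 //; lra.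
  lra.
pose Zc := Ec / c2 ^+ 2.
have Zc0 : 0 <= Zc by rewrite /Zc divr_ge0 // sqr_ge0.
have G1 : 1 <= 3 * n%:R * Zc ^+ 2 + 1.
  have : 0 <= 3 * n%:R * Zc ^+ 2 by rewrite mulr_ge0 ?sqr_ge0 // mulr_ge0.
  lra.
have [m0 [m00 hm0]] := @pow_lemma R gamma C8 (3 * n%:R * Zc ^+ 2 + 1) hg C80 G1.
pose t := Num.min c e / 4.
have t0 : 0 < t by rewrite /t divr_gt0 // lt_min c0 e0.
have tc : t <= c / 4 by rewrite /t ler_pM2r ?invr_gt0 // ge_min lexx.
have te : t <= e / 4 by rewrite /t ler_pM2r ?invr_gt0 // ge_min lexx orbT.
pose t2 := t / (`|C4| + 1).
have t20 : 0 < t2 by rewrite /t2 divr_gt0 //; have := normr_ge0 C4; lra.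
pose m3 := c2 ^+ 2 / (2 * P * Hb).
have m30 : 0 < m3 by rewrite /m3 divr_gt0 ?exprn_gt0 // mulr_gt0 // mulr_gt0.
exists t, (Num.min muhat (Num.min m0 (Num.min t2 m3))).
split => //; split; first by rewrite !lt_min muhat0 m00 t20 m30 /= ge_min lexx.
move=> mu /andP[mu0]; rewrite !le_min => /and4P[muh mum0 mut2 mum3].
move=> x ll lu hxd hx hll hlu' hrho hF dxN dllN dluN hN hact dx dll dlu
  hdx1 hdx2 hdll1 hdll2 hdlu1 hdlu2.
have mumu : 0 < mu <= muhat by rewrite mu0 muh.
have hC4mu := hC4 mu mumu.
have C4mu0 : 0 <= C4 * mu by apply: le_trans hC4mu; rewrite enorm3E sqrtr_ge0.
have C40 : 0 <= C4.
  case: (lerP 0 C4) => // hneg.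
  have : C4 * mu < 0 by rewrite pmulr_llt0.
  lra.
have C4t : C4 * mu <= t.
  have h1 : C4 * mu <= C4 * t2 by apply: ler_wpM2l.
  have h2 : t = t2 * (C4 + 1).
    rewrite /t2 ger0_norm // divfK // gt_eqF //; lra.
  have : 0 <= t2 by apply: ltW.
  nra.
have hcomp : forall i, `|x 0 i - xs 0 i| < 2 * t /\ `|ll 0 i - lls 0 i| < 2 * t /\
    `|lu 0 i - lus 0 i| < 2 * t.
  move=> i.
  have [a1 [a2 a3]] := enorm3_comp (x - xmu mu) (ll - llmu mu) (lu - lumu mu) i.
  have [b1 [b2 b3]] := enorm3_comp (xmu mu - xs) (llmu mu - lls) (lumu mu - lus) i.
  rewrite !subE in a1 a2 a3 b1 b2 b3.
  have d1 := ler_distD (xmu mu 0 i) (x 0 i) (xs 0 i).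
  have d2 := ler_distD (llmu mu 0 i) (ll 0 i) (lls 0 i).
  have d3 := ler_distD (lumu mu 0 i) (lu 0 i) (lus 0 i).
  clear -a1 a2 a3 b1 b2 b3 d1 d2 d3 C4t hrho hC4mu; split; [|split]; lra.
have hH : forall i j, `|hess f x i j| <= Hb.
  apply: he => i; have [h1 _] := hcomp i; clear -h1 te e0; lra.
have hFc : forall i, `|grad f x 0 i - ll 0 i + lu 0 i| <= C1 * mu /\
    `|ll 0 i * (x 0 i - l 0 i) - mu| <= C1 * mu /\ `|lu 0 i * (u 0 i - x 0 i) - mu| <= C1 * mu.
  move=> i; have [h1 [h2 h3]] := enorm3_comp (Fmu1 f x ll lu) (Fmu2 l mu x ll) (Fmu3 u mu x lu) i.
  rewrite Fmu1E Fmu2E Fmu3E in h1 h2 h3.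
  have hF' : enorm3 (Fmu1 f x ll lu) (Fmu2 l mu x ll) (Fmu3 u mu x lu) <= C1 * mu by [].
  split; [|split]; apply: le_trans hF'; assumption.
have hPl : forall i, ll 0 i * (x 0 i - l 0 i) <= P * mu /\ lu 0 i * (u 0 i - x 0 i) <= P * mu.
  move=> i; have [_ [h2 h3]] := hFc i.
  move: h2 h3; rewrite !ler_norml => /andP[_ h2] /andP[_ h3].
  rewrite /P; clear -h2 h3; split; lra.
have [hu hKb] := hK x ll lu hxd.
have hs : stack3 dxN dllN dluN = invmx (Fprime f l u x ll lu) *m (- Fmu f l u (sigma * mu) x ll lu).
  by rewrite -hN mulKmx.
have hNb : enorm3 dxN dllN dluN <= M * mu.
  have hz : enormc (- Fmu f l u (sigma * mu) x ll lu) <= 3 * n%:R * ((C1 + 1) * mu).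
    rewrite /Fmu stack3N; apply: (@enorm3_bound R n) => i.
    rewrite !oppE !normrN Fmu1E Fmu2E Fmu3E.
    have [h1 [h2 h3]] := hFc i.
    move: h1 h2 h3; rewrite !ler_norml => /andP[h1 h1'] /andP[h2 h2'] /andP[h3 h3'].
    have hs1 : sigma * mu <= mu by rewrite -[X in _ <= X]mul1r; apply: ler_wpM2r; clear -s1 mu0; lra.
    have hs2 : 0 <= sigma * mu by rewrite mulr_ge0 //; clear -s0 mu0; lra.
    clear -h1 h1' h2 h2' h3 h3' hs1 hs2; split; [|split]; lra.
  have hz0 : 0 <= enormc (- Fmu f l u (sigma * mu) x ll lu) by rewrite sqrtr_ge0.
  rewrite /enorm3 hs; apply: le_trans (hKb _) _.
  apply: (@le_trans _ _ (`|K| * enormc (- Fmu f l u (sigma * mu) x ll lu))).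
    by apply: ler_wpM2r => //; exact: ler_norm.
  rewrite /M -mulrA; apply: ler_wpM2l => //; apply: le_trans hz _; by rewrite !mulrA.
have hNc : forall i, `|dxN 0 i| <= M * mu /\ `|dllN 0 i| <= M * mu /\ `|dluN 0 i| <= M * mu.
  move=> i; have [h1 [h2 h3]] := enorm3_comp dxN dllN dluN i.
  split; [|split]; apply: le_trans hNb; assumption.
have hrow := hN; rewrite /Fmu stack3N in hrow.
have {}hrow := rows hrow.
have hE : forall i,
    \sum_j hess f x i j * dxN 0 j - dllN 0 i + dluN 0 i = - (grad f x 0 i - ll 0 i + lu 0 i) /\
    ll 0 i * dxN 0 i + (x 0 i - l 0 i) * dllN 0 i = - (ll 0 i * (x 0 i - l 0 i) - sigma * mu) /\
    - (lu 0 i * dxN 0 i) + (u 0 i - x 0 i) * dluN 0 i = - (lu 0 i * (u 0 i - x 0 i) - sigma * mu).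
  by move=> i; have [E1 [E2 E3]] := hrow i; rewrite !oppE Fmu1E Fmu2E Fmu3E in E1 E2 E3.
have br : forall r, r * c2 ^+ 2 <= Ec * mu ^+ 2 -> r <= Zc * mu ^+ 2.
  by move=> r h; rewrite /Zc mulrAC ler_pdivlMr ?exprn_gt0.
have Q0 : 0 <= P * mu by rewrite mulr_ge0 // ltW.
have A0 : 0 <= M * mu by rewrite mulr_ge0 // ltW.
have QA : (P * mu) * (M * mu) <= Ec * mu ^+ 2.
  have -> : Ec * mu ^+ 2 = (P * mu) * (M * mu) + 2 * (P * mu) * (n%:R * (Hb * (M * mu))).
    by rewrite /Ec; ring.
  rewrite lerDl; apply: mulr_ge0; first exact: mulr_ge0.
  apply: mulr_ge0 => //; apply: mulr_ge0 => //; exact: ltW.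
have QW : 2 * (P * mu) * (n%:R * (Hb * (M * mu))) <= Ec * mu ^+ 2.
  have -> : Ec * mu ^+ 2 = (P * mu) * (M * mu) + 2 * (P * mu) * (n%:R * (Hb * (M * mu))).
    by rewrite /Ec; ring.
  by rewrite lerDr mulr_ge0.
have hd : forall i, 0 < x 0 i - l 0 i /\ 0 < u 0 i - x 0 i.
  by move=> i; have /andP[h1 h2] := hx i; rewrite !subr_gt0 h1 h2.
have hHb : 2 * Hb * (P * mu) <= c2 ^+ 2.
  move: mum3; rewrite /m3 ler_pdivlMr; last by rewrite mulr_gt0 // mulr_gt0.
  by move=> h; apply: le_trans h; rewrite le_eqVlt; apply/orP; left; apply/eqP; ring.
have hScase : forall i, c2 ^+ 2 <= (ll 0 i / (x 0 i - l 0 i) + lu 0 i / (u 0 i - x 0 i)) * (P * mu) ->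
    `|dxN 0 i - dS f l u (sigma * mu) x ll lu i| <= Zc * mu ^+ 2.
  move=> i hpq.
  have [d10 d30] := hd i.
  have hp : 0 <= ll 0 i / (x 0 i - l 0 i) by rewrite divr_ge0 // ltW.
  have hq : 0 <= lu 0 i / (u 0 i - x 0 i) by rewrite divr_ge0 // ltW.
  have hDp := @Dpos R (hess f x i i) _ _ Hb (P * mu) c2 c20 hp hq hpq (hH i i) hHb Q0.
  have Dne : hess f x i i + ll 0 i / (x 0 i - l 0 i) + lu 0 i / (u 0 i - x 0 i) != 0.
    apply/eqP => hD0; move: hDp; rewrite hD0 mulr0 mul0r => h.
    by have := exprn_gt0 2 c20; rewrite ltNge h.
  have [E1 [E2 E3]] := hE i.
  rewrite (bigD1 i) //= in E1.
  have eq := @errS R _ _ _ _ _ _ _ _ _ _ _ d10 d30 E1 E2 E3 Dne.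
  rewrite /dS /=; apply: br; apply: le_trans QW.
  apply: (errS_bound hDp eq) => //.
  apply: sum_bound => j; rewrite normrM.
  have [h1 _] := hNc j.
  apply: ler_pM => //; exact: hH.
have e1 : forall v w z : 'rV[R]_n, (v + w) - (v + z) = w - z.
  by move=> v w z; rewrite opprD addrACA subrr add0r.
have e2 : forall v w : 'rV[R]_n, (v + w) - v = w.
  by move=> v w; rewrite addrC addKr.
rewrite !e1 !e2.
apply: (@final_sum R n l u xs dxN dllN dluN dx dll dlu (Zc * mu ^+ 2) (C8 * mu `^ gamma)).
- move=> i /orP[/eqP hxl|/eqP hxu].
  + have [a1 [a2 a3]] := hcomp i.
    have cl := hAl i hxl.
    have llc : c2 <= ll 0 i.
      move: a2; rewrite ltr_norml => /andP[a2 _]; rewrite /c2; clear -a2 cl tc; lra.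
    have [d10 d30] := hd i.
    have [E1 [E2 E3]] := hE i.
    have [hP1 hP3] := hPl i.
    have [_ [hb _]] := hNc i.
    case: (hdx1 i (or_introl hxl)) => ->.
    * apply: hScase.
      have := @big_ratio R _ _ c2 (P * mu) c20 llc d10 hP1.
      move=> h; apply: le_trans h _; apply: ler_wpM2r => //; rewrite lerDl divr_ge0 // ltW //.
    * rewrite /dC hxl eqxx; apply: br; apply: le_trans QA.
      apply: (@err_gen R (ll 0 i) _ (x 0 i - l 0 i) (dllN 0 i)) => //.
      - exact: ltW.
      - by rewrite mulrC.
      - apply: errB => //; exact: ltW.
  + have [a1 [a2 a3]] := hcomp i.
    have cu := hAu i hxu.
    have luc : c2 <= lu 0 i.
      move: a3; rewrite ltr_norml => /andP[a3 _]; rewrite /c2; clear -a3 cu tc; lra.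
    have [d10 d30] := hd i.
    have [E1 [E2 E3]] := hE i.
    have [hP1 hP3] := hPl i.
    have [_ [_ hb]] := hNc i.
    have hxl : xs 0 i != l 0 i by rewrite hxu gt_eqF.
    case: (hdx1 i (or_intror hxu)) => ->.
    * apply: hScase.
      have := @big_ratio R _ _ c2 (P * mu) c20 luc d30 hP3.
      move=> h; apply: le_trans h _; apply: ler_wpM2r => //; rewrite lerDr divr_ge0 // ltW //.
    * rewrite /dC (negbTE hxl); apply: br; apply: le_trans QA.
      apply: (@err_gen R (lu 0 i) _ (u 0 i - x 0 i) (dluN 0 i)) => //.
      - exact: ltW.
      - by rewrite mulrC.
      - apply: errD => //; exact: ltW.
- move=> i; rewrite negb_or => /andP[/eqP h1 /eqP h2]; exact: hdx2.
- move=> i hxl; have [cl _] := hIl i hxl.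
  have [a1 _] := hcomp i.
  have dc : c2 <= x 0 i - l 0 i.
    move: a1; rewrite ltr_norml => /andP[a1 _]; rewrite /c2; clear -a1 cl tc; lra.
  have [d10 d30] := hd i.
  have [E1 [E2 E3]] := hE i.
  have [hP1 hP3] := hPl i.
  have [ha _] := hNc i.
  rewrite hdll1; last exact/eqP.
  rewrite /dllC; apply: br; apply: le_trans QA.
  apply: (@err_gen R (x 0 i - l 0 i) _ (ll 0 i) (dxN 0 i)) => //.
  - exact: ltW.
  - apply: errA => //; exact: ltW.
- move=> i; rewrite negbK => /eqP h; exact: hdll2.
- move=> i hxu; have [cu _] := hIu i hxu.
  have [a1 _] := hcomp i.
  have dc : c2 <= u 0 i - x 0 i.
    move: a1; rewrite ltr_norml => /andP[_ a1]; rewrite /c2; clear -a1 cu tc; lra.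
  have [d10 d30] := hd i.
  have [E1 [E2 E3]] := hE i.
  have [hP1 hP3] := hPl i.
  have [ha _] := hNc i.
  rewrite hdlu1; last exact/eqP.
  rewrite /dluC; apply: br; apply: le_trans QA.
  apply: (@err_gen R (u 0 i - x 0 i) _ (lu 0 i) (dxN 0 i)) => //.
  - exact: ltW.
  - apply: errC => //; exact: ltW.
- move=> i; rewrite negbK => /eqP h; exact: hdlu2.
- exact: hact.
- by rewrite mulr_ge0 ?powR_ge0 // ltW.
- have := hm0 mu; rewrite mu0 mum0 => /(_ isT) h.
  apply: le_trans h.
  have -> : 3 * n%:R * (Zc * mu ^+ 2) ^+ 2 = (3 * n%:R * Zc ^+ 2) * (mu ^+ 2) ^+ 2 by ring.
  rewrite [X in _ <= X]mulrDl mul1r lerDl; exact: sqr_ge0.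
Qed.
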